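(* Let $K$ be a field of characteristic different from $2$, let $V=K^2$, and let $f:V\to V$ be the linear map with matrix $\begin{pmatrix}0&1\\0&0\end{pmatrix}$ in the standard basis (so $f\circ f=0$). Then the algebra $A=A(f,f,f,f)$ is associative and commutative, and the linear map $D:A\to A$ given by $D(e)=0$, $D(a)=0$, $D(v)=v$, $D(v')=-v'$ ($v\in V$) is a $(-1)$-derivation of $A$, i.e. $D(xy)=-D(x)y-xD(y)$ for all $x,y\in A$. Its eigenspace decomposition $A=A_0\oplus A_1\oplus A_{-1}$ with $A_0=Ke\oplus Ka$, $A_1=V$, $A_{-1}=V'$ is a non-semigroup grading of $A$: the induced partial operation on $\{0,1,-1\}$ satisfies $0*0=0$, $0*1=1*0=-1$, $0*(-1)=(-1)*0=1$, and so $(0*0)*(-1)=1\ne -1=0*(0*(-1))$.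
   Context: Let $V'$ be a second copy of $V$, identified with $V$ via a linear bijection $v\mapsto v'$. For linear maps $f_L,f_R,g_L,g_R:V\to V$, the algebra $A(f_L,f_R,g_L,g_R)$ is the vector space $Ke\oplus Ka\oplus V\oplus V'$ (with $e,a$ two new basis elements) with bilinear multiplication determined by $e^2=e$, $a^2=0$, $av=f_L(v)'$, $va=f_R(v)'$, $av'=g_L(v)$, $v'a=g_R(v)$ for $v\in V$, and all other products among $e$, $a$, elements of $V$ and elements of $V'$ equal to zero. A grading of $A$ over a set $\Gamma$ is a decomposition $A=\bigoplus_{g\in\Gamma}A_g$ together with a partial binary operation $*$ on $\Gamma$, defined for exactly those pairs $(g,h)$ with $A_gA_h\ne0$, such that $A_gA_h\subseteq A_{g*h}$ in that case. The grading is a semigroup grading if there is a semigroup $(G,\cdot)$ and an injective map $\Gamma\to G$ under which $g*h=g\cdot h$ whenever $A_gA_h\ne0$; otherwise it is a non-semigroup grading. *)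

(* Defs.v *)
From HB Require Import structures.
From mathcomp Require Import all_boot all_order all_algebra.
Set Implicit Arguments. Unset Strict Implicit. Unset Printing Implicit Defensive.
Import GRing.Theory.
Local Open Scope ring_scope.

Definition is_subspace (K : pzRingType) (A : lmodType K) (S : A -> Prop) :=
  [/\ S 0, (forall x y, S x -> S y -> S (x + y)) &
      (forall (c : K) x, S x -> S (c *: x))].

Definition is_grading (K : pzRingType) (A : lmodType K) (mul : A -> A -> A)
    (Gam : finType) (comp : Gam -> A -> Prop) (star : Gam -> Gam -> option Gam) :=
  [/\ (forall g, is_subspace (comp g)),
      (forall x : A, exists c : Gam -> A,
          (forall g, comp g (c g)) /\ x = \sum_(g : Gam) c g),
      (forall c c' : Gam -> A, (forall g, comp g (c g)) -> (forall g, comp g (c' g)) ->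
          \sum_(g : Gam) c g = \sum_(g : Gam) c' g -> forall g, c g = c' g),
      (forall g h, star g h = None <->
          (forall x y, comp g x -> comp h y -> mul x y = 0)) &
      (forall g h k, star g h = Some k ->
          forall x y, comp g x -> comp h y -> comp k (mul x y))].

Definition is_semigroup_grading (K : pzRingType) (A : lmodType K) (mul : A -> A -> A)
    (Gam : finType) (comp : Gam -> A -> Prop) (star : Gam -> Gam -> option Gam) :=
  is_grading mul comp star /\
  exists (G : Type) (op : G -> G -> G), associative op /\
    exists iota : Gam -> G, injective iota /\
      forall g h k, star g h = Some k -> iota k = op (iota g) (iota h).

Definition is_non_semigroup_grading (K : pzRingType) (A : lmodType K)
    (mul : A -> A -> A) (Gam : finType) (comp : Gam -> A -> Prop)
    (star : Gam -> Gam -> option Gam) :=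
  is_grading mul comp star /\ ~ is_semigroup_grading mul comp star.

(* An element  al e + be a + v + w'  is encoded as ((al, be, v), w),
   with v, w in V = K^2 (column vectors); linear maps V -> V are 2x2
   matrices acting on the left. *)
Notation Alg K := (K^o * K^o * 'cV[K]_2 * 'cV[K]_2)%type.

Section Alg.
Variable K : fieldType.

Definition ce (x : Alg K) : K := x.1.1.1.
Definition ca (x : Alg K) : K := x.1.1.2.
Definition cV (x : Alg K) : 'cV[K]_2 := x.1.2.
Definition cV' (x : Alg K) : 'cV[K]_2 := x.2.

Definition elt_e : Alg K := (1 : K, 0 : K, 0, 0).
Definition elt_a : Alg K := (0 : K, 1 : K, 0, 0).
Definition inV (v : 'cV[K]_2) : Alg K := (0 : K, 0 : K, v, 0).
Definition inV' (v : 'cV[K]_2) : Alg K := (0 : K, 0 : K, 0, v).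

(* Bilinear multiplication:  e^2 = e, a^2 = 0, a v = fL(v)', v a = fR(v)',
   a v' = gL(v), v' a = gR(v), all other products of e, a, V, V' zero. *)
Definition Amul (fL fR gL gR : 'M[K]_2) (x y : Alg K) : Alg K :=
  (ce x * ce y : K, 0 : K,
   ca x *: (gL *m cV' y) + ca y *: (gR *m cV' x),
   ca x *: (fL *m cV y) + ca y *: (fR *m cV x)).

Definition fnil : 'M[K]_2 := \matrix_(i < 2, j < 2) (if (i == 0) && (j == 1) then 1 else 0).

Definition Dmap (x : Alg K) : Alg K := (0 : K, 0 : K, cV x, - cV' x).

End Alg.

Definition Gam : finType := seq_sub [:: 0%Z; 1%Z; (-1)%Z].
Definition g0 : Gam := @SeqSub _ [:: 0%Z; 1%Z; (-1)%Z] 0%Z isT.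
Definition g1 : Gam := @SeqSub _ [:: 0%Z; 1%Z; (-1)%Z] 1%Z isT.
Definition gm1 : Gam := @SeqSub _ [:: 0%Z; 1%Z; (-1)%Z] (-1)%Z isT.

Definition gradcomp (K : fieldType) (g : Gam) (x : Alg K) : Prop :=
  if val g == 0%Z then exists al be : K, x = al *: elt_e K + be *: elt_a K
  else if val g == 1%Z then exists v, x = inV v
  else exists v, x = inV' v.

(* Main.v *)
Require Import Defs.
From Stdlib Require Import Setoid.
From HB Require Import structures.
From mathcomp Require Import all_boot all_order all_algebra.
Import GRing.Theory.
Local Open Scope ring_scope.
Section S. Variable K : fieldType.
Implicit Types (x y : Alg K) (c : K).
Lemma ceD x y : ce (x + y) = ce x + ce y. Proof. by []. Qed.
Lemma caD x y : ca (x + y) = ca x + ca y. Proof. by []. Qed.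
Lemma cVD x y : cV (x + y) = cV x + cV y. Proof. by []. Qed.
Lemma cV'D x y : cV' (x + y) = cV' x + cV' y. Proof. by []. Qed.
Lemma ceZ c x : ce (c *: x) = c * ce x. Proof. by []. Qed.
Lemma caZ c x : ca (c *: x) = c * ca x. Proof. by []. Qed.
Lemma cVZ c x : cV (c *: x) = c *: cV x. Proof. by []. Qed.
Lemma cV'Z c x : cV' (c *: x) = c *: cV' x. Proof. by []. Qed.
Lemma ceN x : ce (- x) = - ce x. Proof. by []. Qed.
Lemma caN x : ca (- x) = - ca x. Proof. by []. Qed.
Lemma cVN x : cV (- x) = - cV x. Proof. by []. Qed.
Lemma cV'N x : cV' (- x) = - cV' x. Proof. by []. Qed.
Lemma ce0 : ce (0 : Alg K) = 0. Proof. by []. Qed.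
Lemma ca0 : ca (0 : Alg K) = 0. Proof. by []. Qed.
Lemma cV0 : cV (0 : Alg K) = 0. Proof. by []. Qed.
Lemma cV'0 : cV' (0 : Alg K) = 0. Proof. by []. Qed.
Lemma Aeq x y : ce x = ce y -> ca x = ca y -> cV x = cV y -> cV' x = cV' y -> x = y.
Proof. by case: x => [[[? ?] ?] ?]; case: y => [[[? ?] ?] ?]; rewrite /ce /ca /cV /cV' /= => -> -> -> ->. Qed.
Definition compE := (ceD, caD, cVD, cV'D, ceZ, caZ, cVZ, cV'Z, ceN, caN, cVN, cV'N, ce0, ca0, cV0, cV'0).
Variables fL fR gL gR : 'M[K]_2.
Lemma ceM x y : ce (Amul fL fR gL gR x y) = ce x * ce y. Proof. by []. Qed.
Lemma caM x y : ca (Amul fL fR gL gR x y) = 0. Proof. by []. Qed.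
Lemma cVM x y : cV (Amul fL fR gL gR x y) = ca x *: (gL *m cV' y) + ca y *: (gR *m cV' x). Proof. by []. Qed.
Lemma cV'M x y : cV' (Amul fL fR gL gR x y) = ca x *: (fL *m cV y) + ca y *: (fR *m cV x). Proof. by []. Qed.
Lemma DE1 x : ce (Dmap x) = 0. Proof. by []. Qed.
Lemma DE2 x : ca (Dmap x) = 0. Proof. by []. Qed.
Lemma DE3 x : cV (Dmap x) = cV x. Proof. by []. Qed.
Lemma DE4 x : cV' (Dmap x) = - cV' x. Proof. by []. Qed.
Lemma ee1 : ce (elt_e K) = 1. Proof. by []. Qed.
Lemma ee2 : ca (elt_e K) = 0. Proof. by []. Qed.
Lemma ee3 : cV (elt_e K) = 0. Proof. by []. Qed.
Lemma ee4 : cV' (elt_e K) = 0. Proof. by []. Qed.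
Lemma ea1 : ce (elt_a K) = 0. Proof. by []. Qed.
Lemma ea2 : ca (elt_a K) = 1. Proof. by []. Qed.
Lemma ea3 : cV (elt_a K) = 0. Proof. by []. Qed.
Lemma ea4 : cV' (elt_a K) = 0. Proof. by []. Qed.
Lemma iv1 (v : 'cV[K]_2) : ce (inV v) = 0. Proof. by []. Qed.
Lemma iv2 (v : 'cV[K]_2) : ca (inV v) = 0. Proof. by []. Qed.
Lemma iv3 (v : 'cV[K]_2) : cV (inV v) = v. Proof. by []. Qed.
Lemma iv4 (v : 'cV[K]_2) : cV' (inV v) = 0. Proof. by []. Qed.
Lemma iw1 (v : 'cV[K]_2) : ce (inV' v) = 0. Proof. by []. Qed.
Lemma iw2 (v : 'cV[K]_2) : ca (inV' v) = 0. Proof. by []. Qed.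
Lemma iw3 (v : 'cV[K]_2) : cV (inV' v) = 0. Proof. by []. Qed.
Lemma iw4 (v : 'cV[K]_2) : cV' (inV' v) = v. Proof. by []. Qed.
Lemma ffnil : fnil K *m fnil K = 0.
Proof. apply/matrixP => i j; rewrite !mxE big_ord_recr big_ord_recr big_ord0 !mxE.
by case: i => [[|[|?]] ?] //; case: j => [[|[|?]] ?] //=; rewrite ?mulr0 ?mul0r ?addr0. Qed.
Lemma ffv (v : 'cV[K]_2) : fnil K *m (fnil K *m v) = 0.
Proof. by rewrite mulmxA ffnil mul0mx. Qed.
Lemma ffM a b (u w : 'cV[K]_2) : fnil K *m (a *: (fnil K *m u) + b *: (fnil K *m w)) = 0.
Proof. by rewrite mulmxDr -!scalemxAr !ffv !scaler0 addr0. Qed.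
Definition e2 : 'cV[K]_2 := \col_i (if i == 1 then 1 else 0).
Lemma fe2 : fnil K *m e2 != 0.
Proof. apply/negP => /eqP/matrixP/(_ 0 0); rewrite !mxE big_ord_recr big_ord_recr big_ord0 !mxE /= mulr0 mul1r add0r.
by rewrite add0r; move/eqP; rewrite oner_eq0. Qed.
End S.
Lemma Gam_cases (h : Gam) : h = g0 \/ h = g1 \/ h = gm1.
Proof.
have : ssval h \in [:: 0%Z; 1%Z; (-1)%Z] := ssvalP h.
rewrite !inE => /or3P[] /eqP E.
- by left; apply: val_inj.
- by right; left; apply: val_inj.
- by right; right; apply: val_inj.
Qed.
Definition AE := (compE, ceM, caM, cVM, cV'M, DE1, DE2, DE3, DE4, ee1, ee2, ee3, ee4,
  ea1, ea2, ea3, ea4, iv1, iv2, iv3, iv4, iw1, iw2, iw3, iw4).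
Section T. Variable K : fieldType.
Implicit Types x y : Alg K.
Lemma gc0 x : gradcomp g0 x <-> cV x = 0 /\ cV' x = 0.
Proof.
rewrite /gradcomp /=; split.
  by case=> al [be ->]; rewrite !AE !scaler0 addr0.
case=> h1 h2; exists (ce x), (ca x); apply: Aeq; rewrite !AE ?h1 ?h2 ?scaler0 ?addr0 //.
  by rewrite mulr1 mulr0 addr0.
by rewrite mulr1 mulr0 add0r.
Qed.
Lemma gc1 x : gradcomp g1 x <-> [/\ ce x = 0, ca x = 0 & cV' x = 0].
Proof.
rewrite /gradcomp /=; split.
  by case=> v ->; rewrite !AE.
by case=> h1 h2 h3; exists (cV x); apply: Aeq; rewrite !AE.
Qed.
Lemma gcm1 x : gradcomp gm1 x <-> [/\ ce x = 0, ca x = 0 & cV x = 0].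
Proof.
rewrite /gradcomp /=; split.
  by case=> v ->; rewrite !AE.
by case=> h1 h2 h3; exists (cV' x); apply: Aeq; rewrite !AE.
Qed.
Lemma sum3 (F : Gam -> Alg K) : \sum_(g : Gam) F g = F g0 + F g1 + F gm1.
Proof.
rewrite (bigD1 g0) // (bigD1 g1) // (bigD1 gm1) //= big1 ?addr0 ?addrA //.
move=> h /andP[/andP[a b] c]; exfalso.
by case: (Gam_cases h) => [E|[E|E]]; subst h; rewrite eqxx in a b c.
Qed.
End T.
Definition star (g h : Gam) : option Gam :=
  if val g == 0%Z then (if val h == 0%Z then Some g0 else if val h == 1%Z then Some gm1 else Some g1)
  else if val h == 0%Z then (if val g == 1%Z then Some gm1 else Some g1) else None.

Lemma negv_eq (K : fieldType) (charK : (2%:R : K) != 0) (v : 'cV[K]_2) : - v = v -> v = 0.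
Proof.
move=> E; have : (2%:R : K) *: v = 0 by rewrite scaler_nat mulr2n -{1}E addNr.
by move/eqP; rewrite scaler_eq0 (negbTE charK) => /eqP.
Qed.


Ltac crush :=
  repeat match goal with H : _ /\ _ |- _ => destruct H | H : and3 _ _ _ |- _ => destruct H end;
  rewrite ?AE;
  repeat match goal with H : ?a = 0 |- _ =>
    lazymatch a with 0 => fail | _ => rewrite H end end;
  rewrite ?mulr0 ?mul0r ?mulmx0 ?scaler0 ?scale0r ?addr0 ?add0r ?oppr0; try done.

Lemma grad (K : fieldType) :
  is_grading (Amul (fnil K) (fnil K) (fnil K) (fnil K)) (@gradcomp K) star.
Proof.
split.
- move=> g; case: (Gam_cases g) => [->|[->|->]]; split.
  + by apply/gc0; crush.
  + by move=> x y /gc0 Hx /gc0 Hy; apply/gc0; crush.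
  + by move=> c x /gc0 Hx; apply/gc0; crush.
  + by apply/gc1; crush.
  + by move=> x y /gc1 Hx /gc1 Hy; apply/gc1; crush.
  + by move=> c x /gc1 Hx; apply/gc1; crush.
  + by apply/gcm1; crush.
  + by move=> x y /gcm1 Hx /gcm1 Hy; apply/gcm1; crush.
  + by move=> c x /gcm1 Hx; apply/gcm1; crush.
- move=> x; exists (fun g => if val g == 0%Z then ce x *: elt_e K + ca x *: elt_a K
    else if val g == 1%Z then inV (cV x) else inV' (cV' x)); split.
    move=> g; case: (Gam_cases g) => [->|[->|->]] /=; rewrite ?gc0 ?gc1 ?gcm1; crush.
  rewrite sum3 /=; apply: Aeq; crush.
    by rewrite mulr1.
  by rewrite mulr1.
- move=> c c' Hc Hc' E.
  move: (Hc g0) (Hc g1) (Hc gm1) (Hc' g0) (Hc' g1) (Hc' gm1).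
  move=> /gc0[a1 a2] /gc1[b1 b2 b3] /gcm1[d1 d2 d3] /gc0[a1' a2'] /gc1[b1' b2' b3'] /gcm1[d1' d2' d3'].
  rewrite !sum3 in E.
  have e1 := congr1 (@ce K) E; have e2 := congr1 (@ca K) E;
  have e3 := congr1 (@cV K) E; have e4 := congr1 (@cV' K) E.
  rewrite !AE in e1 e2 e3 e4.
  rewrite ?a1 ?a2 ?b1 ?b2 ?b3 ?d1 ?d2 ?d3 ?a1' ?a2' ?b1' ?b2' ?b3' ?d1' ?d2' ?d3' ?addr0 ?add0r in e1 e2 e3 e4.
  move=> g; case: (Gam_cases g) => [->|[->|->]]; apply: Aeq;
    rewrite ?a1 ?a2 ?b1 ?b2 ?b3 ?d1 ?d2 ?d3 ?a1' ?a2' ?b1' ?b2' ?b3' ?d1' ?d2' ?d3' //.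
- move=> g h; case: (Gam_cases g) => [->|[->|->]]; case: (Gam_cases h) => [->|[->|->]];
    rewrite /star /=; split=> //; try (move=> _ x y; rewrite ?gc0 ?gc1 ?gcm1 => Hx Hy; apply: Aeq; crush; fail).
  + move=> H; have := congr1 (@ce K) (H (elt_e K) (elt_e K) ltac:(by apply/gc0; crush) ltac:(by apply/gc0; crush)).
    by rewrite !AE mulr1 => /eqP; rewrite oner_eq0.
  + move=> H; have := congr1 (@cV' K) (H (elt_a K) (inV (e2 K)) ltac:(by apply/gc0; crush) ltac:(by apply/gc1; crush)).
    by rewrite !AE scale1r scale0r addr0 => /eqP; rewrite (negbTE (fe2 K)).
  + move=> H; have := congr1 (@cV K) (H (elt_a K) (inV' (e2 K)) ltac:(by apply/gc0; crush) ltac:(by apply/gcm1; crush)).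
    by rewrite !AE scale1r scale0r addr0 => /eqP; rewrite (negbTE (fe2 K)).
  + move=> H; have := congr1 (@cV' K) (H (inV (e2 K)) (elt_a K) ltac:(by apply/gc1; crush) ltac:(by apply/gc0; crush)).
    by rewrite !AE scale1r scale0r add0r => /eqP; rewrite (negbTE (fe2 K)).
  + move=> H; have := congr1 (@cV K) (H (inV' (e2 K)) (elt_a K) ltac:(by apply/gcm1; crush) ltac:(by apply/gc0; crush)).
    by rewrite !AE scale1r scale0r add0r => /eqP; rewrite (negbTE (fe2 K)).
- move=> g h k; case: (Gam_cases g) => [->|[->|->]]; case: (Gam_cases h) => [->|[->|->]];
    rewrite /star /= => // -[<-] x y; rewrite ?gc0 ?gc1 ?gcm1 => Hx Hy; crush.
Qed.

Theorem mainTheorem5 (K : fieldType) (charK : (2%:R : K) != 0) :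
  let f := fnil K in
  let mul := Amul f f f f in
  (forall x y z : Alg K, mul x (mul y z) = mul (mul x y) z) /\
  (forall x y : Alg K, mul x y = mul y x) /\
  (forall (c : K) (x y : Alg K), Dmap (c *: x + y) = c *: Dmap x + Dmap y) /\
  (forall x y : Alg K, Dmap (mul x y) = - mul (Dmap x) y - mul x (Dmap y)) /\
  (forall (g : Gam) (x : Alg K), gradcomp g x <-> Dmap x = (val g)%:~R *: x) /\
  exists star : Gam -> Gam -> option Gam,
    is_non_semigroup_grading mul (@gradcomp K) star /\
    star g0 g0 = Some g0 /\
    star g0 g1 = Some gm1 /\ star g1 g0 = Some gm1 /\
    star g0 gm1 = Some g1 /\ star gm1 g0 = Some g1 /\
    obind (fun k => star k gm1) (star g0 g0) = Some g1 /\
    obind (star g0) (star g0 gm1) = Some gm1 /\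
    g1 != gm1.
Proof.
move=> f mul; rewrite {}/mul {}/f.
split.
  move=> x y z; apply: Aeq; rewrite !AE ?mulrA //.
    by rewrite !ffM !scaler0 !scale0r ?addr0 ?add0r.
  by rewrite !ffM !scaler0 !scale0r ?addr0 ?add0r.
split.
  move=> x y; apply: Aeq; rewrite !AE; [exact: mulrC | by [] | exact: addrC | exact: addrC].
split.
  move=> c x y; apply: Aeq; rewrite !AE; [by rewrite mulr0 addr0 | by rewrite mulr0 addr0 | by [] | by rewrite opprD scalerN].
split.
  move=> x y; apply: Aeq; rewrite !AE.
  - by rewrite mul0r mulr0 oppr0 addr0.
  - by rewrite oppr0 addr0.
  - by rewrite !scale0r add0r addr0 !mulmxN !scalerN !opprK addrC.
  - by rewrite !scale0r add0r addr0 opprD addrC.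
split.
  move=> g x; case: (Gam_cases g) => E; last case: E => E; subst g.
  - rewrite gc0 (_ : ((val g0)%:~R : K) = 0) // scale0r; split.
      by case=> h1 h2; apply: Aeq; rewrite !AE ?h1 ?h2 ?oppr0.
    by move=> E; split; [move: (congr1 (@cV K) E) | move: (congr1 (@cV' K) E)];
      rewrite !AE // => /eqP; rewrite oppr_eq0 => /eqP.
  - rewrite gc1 (_ : ((val g1)%:~R : K) = 1) // scale1r; split.
      by case=> h1 h2 h3; apply: Aeq; rewrite !AE ?h1 ?h2 ?h3 ?oppr0.
    move=> E; have h1 := congr1 (@ce K) E; have h2 := congr1 (@ca K) E;
    have h3 := congr1 (@cV' K) E; rewrite !AE in h1 h2 h3.
    by split; [rewrite -h1 | rewrite -h2 | exact: negv_eq].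
  - rewrite gcm1 (_ : ((val gm1)%:~R : K) = -1) // scaleN1r; split.
      by case=> h1 h2 h3; apply: Aeq; rewrite !AE ?h1 ?h2 ?h3 ?oppr0.
    move=> E; have h1 := congr1 (@ce K) E; have h2 := congr1 (@ca K) E;
    have h3 := congr1 (@cV K) E; rewrite !AE in h1 h2 h3.
    split; [apply/eqP; rewrite -oppr_eq0 -h1 // | apply/eqP; rewrite -oppr_eq0 -h2 // |].
    by apply: negv_eq; apply/esym.
exists star; split; last by [].
split; first exact: grad.
case=> _ [G [op [assoc [iota [inj H]]]]].
have h00 := H g0 g0 g0 erefl; have h01 := H g0 gm1 g1 erefl; have h02 := H g0 g1 gm1 erefl.
have := assoc (iota g0) (iota g0) (iota gm1).
rewrite -h01 -h02 -h00 -h01 => /inj E.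
by move: E; apply/eqP.
Qed.
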